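(* In the setting described in the context, suppose $T_{\mathrm{renorm}}\ge\ln\!\big(\frac{b_2\|f\|_\infty T_{\mathrm{sel}}}{b_1}\big)(b_2a_0)^{-1}$ and the bounded-flux assumption holds. Then for all $t\in[T^0_1,T^2_M]$ and $j\in\bar J_n$, $s_0-w^j(T^0_1)\Phi^j(t)\ge\delta$.
   Context: Let $I$ be a finite set, $n\in\{1,\dots,|I|\}$, $J_n$ the set of $n$-element subsets of $I$. Input concentrations $x^i\ge0$, $i\in I$, are prescribed functions of time, continuous on $[0,T_{\mathrm{sel}}]$; flux $\Phi^j(t):=\prod_{i\in j}x^i(t)$. Positive constants $a_0,b_1,b_2,s_0,\theta,\rho,T_{\mathrm{sel}},T_{\mathrm{renorm}}$; $f:[0,\infty)\to[0,\infty)$ continuous, $f\equiv0$ on $[0,\theta]$, increasing on $(\theta,\theta+\rho)$, $f\equiv\|f\|_\infty$ on $[\theta+\rho,\infty)$. $\bar J_n$ (assumed nonempty) is the set of $j\in J_n$ such that $\Phi^j>\theta$ on some $[t_0,t_1]\subset[0,T_{\mathrm{sel}}]$ with $t_0<t_1$. $T^0_1:=T_{\mathrm{sel}}+T_{\mathrm{renorm}}$. For $j\in\bar J_n$: $w^j(0)=0$, $\dot w^j=f(\Phi^j)$ on $[0,T_{\mathrm{sel}}]$, $\dot w^j=a_0(b_1-b_2w^j)$ on $[T_{\mathrm{sel}},T^0_1]$, and $w^j$ is constant afterwards (so $x^j(t):=w^j(T^0_1)\Phi^j(t)$ for $t\ge T^0_1$). $T^2_M>T^0_1$ denotes the end of the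 learning phase. Bounded-flux assumption: there is $\alpha>0$ with $\sup_{j\in\bar J_n,\,t\in[T^0_1,T^2_M]}\Phi^j(t)\le\alpha$, and $\delta:=s_0-2\frac{b_1}{b_2}\alpha>0$. *)

(* Defs.v *)
From HB Require Import structures.
From mathcomp Require Import all_boot all_order all_algebra.
From mathcomp Require Import all_classical all_reals all_analysis.
Set Implicit Arguments. Unset Strict Implicit. Unset Printing Implicit Defensive.
Import Order.TTheory GRing.Theory Num.Theory.
Import numFieldNormedType.Exports.
Local Open Scope classical_set_scope.
Local Open Scope ring_scope.

Definition Phi (R : realType) (I : finType) (x : I -> R -> R)
  (j : {set I}) (t : R) : R := \prod_(i in j) x i t.

Definition barJ (R : realType) (I : finType) (n : nat) (x : I -> R -> R)
  (theta Tsel : R) : set {set I} :=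
  [set j : {set I} | #|j| = n /\
     exists t0 t1 : R, 0 <= t0 /\ t0 < t1 /\ t1 <= Tsel /\
       (forall t, t0 <= t -> t <= t1 -> theta < Phi x j t)].

(* Main.v *)
Require Import Defs.
From HB Require Import structures.
From mathcomp Require Import all_boot all_order all_algebra.
From mathcomp Require Import all_classical all_reals all_analysis.
From mathcomp Require Import ring lra.
Import Order.TTheory GRing.Theory Num.Theory.
Import numFieldNormedType.Exports.
Local Open Scope classical_set_scope.
Local Open Scope ring_scope.

Lemma f_bound (R : realType) (f : R -> R) (theta rho : R) :
  0 < theta -> 0 < rho ->
  {within `[0, +oo[, continuous f} ->
  (forall y, 0 <= y -> 0 <= f y) ->
  (forall y, 0 <= y -> y <= theta -> f y = 0) ->
  (forall y z, theta < y -> y < z -> z < theta + rho -> f y < f z) ->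
  (forall y, theta + rho <= y -> f y = f (theta + rho)) ->
  forall y, 0 <= y -> f y <= f (theta + rho).
Proof.
move=> th0 rh0 fc f0 fz fi fc2 y y0.
have F0 : 0 <= f (theta + rho) by apply: f0; rewrite addr_ge0 // ltW.
have [yth|thy] := lerP y theta; first by rewrite fz.
have [ytr|try] := lerP (theta + rho) y; first by rewrite fc2.
move/continuous_within_itvcyP: fc => [fc _].
have ct : {for theta + rho, continuous f}.
  by apply: fc; rewrite in_itv /= andbT addr_gt0.
have cl := cvg_at_left_filter ct.
apply: (cvgr_to_ge cl).
near=> z.
have yz : y < z by near: z; exact: nbhs_left_gt.
have zt : z < theta + rho by near: z; exact: nbhs_left_lt.
exact/ltW/fi.
Unshelve. all: by end_near. Qed.
Theorem proposition18 (R : realType) (I : finType) (n : nat)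
  (x : I -> R -> R) (f : R -> R) (w : {set I} -> R -> R)
  (a0 b1 b2 s0 theta rho Tsel Trenorm T2M alpha : R) :
  (1 <= n <= #|I|)%N ->
  0 < a0 -> 0 < b1 -> 0 < b2 -> 0 < s0 -> 0 < theta -> 0 < rho ->
  0 < Tsel -> 0 < Trenorm ->
  (* inputs: nonnegative, continuous on [0,Tsel] *)
  (forall i t, 0 <= x i t) ->
  (forall i, {within `[0, Tsel], continuous (x i)}) ->
  (* f : [0,oo) -> [0,oo), continuous, 0 on [0,theta], strictly increasing
     on (theta, theta+rho), equal to its sup norm ||f||_oo = f(theta+rho)
     on [theta+rho, oo) *)
  {within `[0, +oo[, continuous f} ->
  (forall y, 0 <= y -> 0 <= f y) ->
  (forall y, 0 <= y -> y <= theta -> f y = 0) ->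
  (forall y z, theta < y -> y < z -> z < theta + rho -> f y < f z) ->
  (forall y, theta + rho <= y -> f y = f (theta + rho)) ->
  (* \bar J_n nonempty *)
  barJ n x theta Tsel !=set0 ->
  (* w^j : w(0)=0, dw/dt = f(Phi^j) on [0,Tsel],
     dw/dt = a0 (b1 - b2 w) on [Tsel, T01], with T01 = Tsel + Trenorm *)
  (forall j, barJ n x theta Tsel j ->
     [/\ w j 0 = 0,
         {within `[0, Tsel + Trenorm], continuous (w j)},
         (forall t, 0 < t < Tsel ->
            is_derive t 1 (w j) (f (Phi x j t))) &
         (forall t, Tsel < t < Tsel + Trenorm ->
            is_derive t 1 (w j) (a0 * (b1 - b2 * w j t)))]) ->
  Tsel + Trenorm < T2M ->
  (* renormalization time hypothesis *)
  ln (b2 * f (theta + rho) * Tsel / b1) / (b2 * a0) <= Trenorm ->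
  (* bounded-flux assumption *)
  0 < alpha ->
  (forall j t, barJ n x theta Tsel j -> Tsel + Trenorm <= t <= T2M ->
     Phi x j t <= alpha) ->
  0 < s0 - 2 * (b1 / b2) * alpha ->
  forall j t, barJ n x theta Tsel j -> Tsel + Trenorm <= t <= T2M ->
    s0 - 2 * (b1 / b2) * alpha <= s0 - w j (Tsel + Trenorm) * Phi x j t.
Proof.
move=> _ a0p b1p b2p s0p thp rhp Tp Trp x0 _ fc f0 fz fi fc2 _ Hw _ Hln alp Hal Hd j t hj ht.
have [w0 wc wd1 wd2] := Hw j hj.
set F := f (theta + rho).
have Phi0 : forall s, 0 <= Phi x j s.
  by move=> s; rewrite /Phi; apply: prodr_ge0 => i _; exact: x0.
have F0 : 0 <= F by apply: f0; rewrite addr_ge0 // ltW.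
have fb := @f_bound _ f theta rho thp rhp fc f0 fz fi fc2.
have S1 : w j Tsel <= F * Tsel.
  have wc1 : {within `[0, Tsel], continuous (w j)}.
    apply: continuous_subspaceW wc; apply: subset_itvl.
    by rewrite bnd_simp lerDl ltW.
  have [c c01 Hc] := MVT Tp (fun s hs => wd1 s hs) wc1.
  move: Hc; rewrite w0 !subr0 => ->.
  by rewrite ler_pM2r // fb.
set c := b1 / b2.
set k := b2 * a0.
pose g := ((w j - cst c) * (expR \o (k \*: id))) : R -> R.
have T01 : Tsel < Tsel + Trenorm by rewrite ltrDl.
have gd : forall s, s \in `]Tsel, Tsel + Trenorm[ -> is_derive s 1 g 0.
  move=> s hs.
  have h1 : is_derive s 1 (w j - cst c) (a0 * (b1 - b2 * w j s) - 0).
    apply: is_deriveB.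
    by apply: wd2; move: hs; rewrite in_itv.
  have h2 : is_derive s 1 (expR \o (k \*: id)) (expR ((k \*: id) s) * (k *: 1)).
    exact: is_derive1_comp.
  have h3 := is_deriveM h1 h2.
  apply: is_derive_eq h3 _.
  rewrite /= !fctE /c /k subr0 /GRing.scale /= mulr1.
  field; exact: lt0r_neq0.
have gc : {within `[Tsel, Tsel + Trenorm], continuous g}.
  move=> s; apply: cvgM.
    apply: cvgB; last exact: cvg_cst.
    move: s; apply: continuous_subspaceW wc; apply: subset_itvr.
    by rewrite bnd_simp ltW.
  apply: continuous_subspaceT => z.
  apply: differentiable_continuous; apply/derivable1_diffP.
  exact: ex_derive.
have [s _ Hs] := MVT T01 gd gc.
move: Hs; rewrite mul0r => /eqP; rewrite subr_eq0 => /eqP.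
rewrite /g /= !fctE /=.
rewrite /GRing.scale /= mulrDr expRD.
set W1 := w j (Tsel + Trenorm); set W0 := w j Tsel.
set e0 := expR (k * Tsel); set E := expR (k * Trenorm) => Heq.
have e0p : 0 < e0 by exact: expR_gt0.
have Ep : 0 < E by exact: expR_gt0.
have HW : (W1 - c) * E = W0 - c.
  apply: (mulIf (lt0r_neq0 e0p)); rewrite -Heq; ring.
have cp : 0 < c by rewrite /c divr_gt0.
have FE : F * Tsel <= c * E.
  move: F0; rewrite le_eqVlt => /predU1P[<-|Fp].
    by rewrite mul0r mulr_ge0 // ltW.
  have Xp : 0 < b2 * F * Tsel / b1 by rewrite divr_gt0 // !mulr_gt0.
  have kp : 0 < k by rewrite /k mulr_gt0.
  rewrite ler_pdivrMr // in Hln.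
  have : expR (ln (b2 * F * Tsel / b1)) <= E.
    by rewrite /E ler_expR (mulrC k).
  rewrite lnK ?posrE // => XE.
  have -> : F * Tsel = (b2 * F * Tsel / b1) * c.
    by rewrite /c; field; rewrite !lt0r_neq0.
  by rewrite mulrC ler_pM2l.
have W1c : W1 <= 2 * c.
  have : (W1 - c) * E <= c * E.
    rewrite HW; apply: le_trans (le_trans S1 FE); rewrite lerBlDr lerDl ; exact: ltW.
  move=> h; nra.
have P0 := Phi0 t.
have Pa := Hal j t hj ht.
set P := Phi x j t in P0 Pa *.
nra.
Qed.
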